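(* Let $a,b,c\in\mathbb{R}\setminus\{0\}$ with $b^2-4ac>0$, and let $\{P_m(z)\}_{m\geq 0}$ be the sequence of functions of $z$ generated by \[ \sum_{m=0}^\infty P_m(z)\, t^m=\frac{1}{(at^2+bt+c)(1-tz)}. \] Let $\alpha,\beta$ be the zeros of $at^2+bt+c$ with $|\alpha|\leq|\beta|$. Then there exists $N\in\mathbb{N}$ such that for all $m>N$, \[ \mathcal{Z}(P_m)\cap B\!\left(\tfrac12\left(\tfrac{1}{|\alpha|}+\tfrac{1}{|\beta|}\right),0\right)=\emptyset . \]
   Context: A sequence $\{P_m(z)\}$ is generated by $f(t,z)$ if, for each $z\in\mathbb{C}$, $f(t,z)$ is analytic in $t$ in a neighborhood of $t=0$ and $P_m(z)$ is the coefficient of $t^m$ in the power series expansion of $f(t,z)$ in $t$ about $0$. $\mathcal{Z}(P_m)$ is the set of zeros of $P_m$ in $\mathbb{C}$, and $B(R,0)$ is the open disk of radius $R$ centered at $0$. *)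

(* Defs.v *)
From Stdlib Require Import Reals.
From Coquelicot Require Import Coquelicot.
Open Scope R_scope.

Fixpoint Cpow (x : C) (n : nat) : C :=
  match n with O => RtoC 1 | S k => Cmult x (Cpow x k) end.

Definition generated_by (P : nat -> C -> C) (f : C -> C -> C) : Prop :=
  forall z : C, exists r : R, 0 < r /\
    forall t : C, Cmod t < r ->
      is_series (fun m => Cmult (P m z) (Cpow t m)) (f t z).

Definition ball0 (rad : R) : C -> Prop := fun z => Cmod z < rad.

(* Main.v *)
Require Import Defs.
From Stdlib Require Import Reals Lra Lia Arith.
From Coquelicot Require Import Coquelicot.
Open Scope R_scope.

Lemma Cmod_Cpow (t : C) n : Cmod (Defs.Cpow t n) = Cmod t ^ n.
Proof.
  induction n; simpl. apply Cmod_1. rewrite Cmod_mult, IHn. reflexivity.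
Qed.

Lemma bound_finite (f : nat -> R) N : exists K, forall n, (n <= N)%nat -> f n <= K.
Proof.
  induction N.
  - exists (f 0%nat). intros n Hn. replace n with 0%nat by lia. lra.
  - destruct IHN as [K HK]. exists (Rmax K (f (S N))). intros n Hn.
    destruct (Nat.eq_dec n (S N)) as [->|Hne].
    + apply Rmax_r.
    + eapply Rle_trans. apply HK. lia. apply Rmax_l.
Qed.

Lemma series_terms_bounded (a : nat -> C) (l : C) :
  is_series a l -> exists M, forall n, Cmod (a n) <= M.
Proof.
  intros H. unfold is_series in H.
  destruct (proj1 (filterlim_locally _ _) H (mkposreal 1 Rlt_0_1)) as [N HN].
  destruct (bound_finite (fun n => Cmod (sum_n a n)) N) as [K HK].
  set (K' := Rmax K (Cmod l + @norm_factor _ C_NormedModule)).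
  assert (HS : forall n, Cmod (sum_n a n) <= K').
  { intros n. destruct (le_lt_dec n N) as [h|h].
    - eapply Rle_trans. apply HK; lia. apply Rmax_l.
    - eapply Rle_trans. 2: apply Rmax_r.
      assert (Hb := HN n ltac:(lia)). apply norm_compat2 in Hb.
      simpl in Hb.
      change (norm (minus (sum_n a n) l)) with (Cmod (sum_n a n - l)%C) in Hb.
      replace (sum_n a n) with ((sum_n a n - l) + l)%C by ring.
      eapply Rle_trans. apply Cmod_triangle. lra. }
  exists (2 * K'). intros [|n].
  - rewrite <- sum_O. assert (h:=HS 0%nat). assert (0 <= Cmod (sum_n a 0)) by apply Cmod_ge_0. lra.
  - replace (a (S n)) with (sum_n a (S n) - sum_n a n)%C.
    2:{ rewrite sum_Sn. change (plus (sum_n a n) (a (S n))) with (sum_n a n + a (S n))%C. ring. }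
    unfold Cminus. eapply Rle_trans. apply Cmod_triangle. rewrite Cmod_opp.
    assert (h1:=HS (S n)). assert (h2:=HS n). lra.
Qed.

Lemma coef0 (e : nat -> C) (rho : R) : 0 < rho ->
  (forall t : C, 0 < Cmod t < rho -> is_series (fun k => e k * Defs.Cpow t k)%C (RtoC 0)) ->
  e 0%nat = RtoC 0.
Proof.
  intros Hr H.
  set (t0 := rho / 2).
  assert (Ht0 : Cmod (RtoC t0) = t0) by (rewrite Cmod_R; apply Rabs_pos_eq; unfold t0; lra).
  destruct (series_terms_bounded _ _ (H (RtoC t0) ltac:(rewrite Ht0; unfold t0; lra))) as [M HM].
  assert (HM0 : 0 <= M) by (eapply Rle_trans; [apply Cmod_ge_0| apply (HM 0%nat)]).
  destruct (Ceq_dec (e 0%nat) 0) as [h|hne]; [exact h|exfalso].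
  set (E := Cmod (e 0%nat)).
  assert (HE : 0 < E) by (apply Cmod_gt_0; exact hne).
  set (x := Rmin (1/2) (E / (8 * (M + 1)))).
  assert (Hx0 : 0 < x) by (unfold x; apply Rmin_pos; [lra| apply Rdiv_lt_0_compat; lra]).
  assert (Hx1 : x <= 1/2) by apply Rmin_l.
  assert (Hx2 : x <= E / (8 * (M + 1))) by apply Rmin_r.
  assert (HMx : 2 * M * x < E / 2).
  { assert (x * (8 * (M+1)) <= E).
    { apply (Rmult_le_compat_r (8*(M+1))) in Hx2; [|lra].
      unfold Rdiv in Hx2. rewrite Rmult_assoc, Rinv_l in Hx2 by lra. lra. }
    nra. }
  set (t := RtoC (x * t0)).
  assert (Ht : Cmod t = x * t0) by (unfold t; rewrite Cmod_R; apply Rabs_pos_eq; unfold t0; nra).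
  set (a := fun k => (e k * Defs.Cpow t k)%C).
  assert (Hind : forall n, Cmod (sum_n a n - e 0%nat)%C + 2 * M * x ^ (S n) <= 2 * M * x).
  { induction n.
    - rewrite sum_O. unfold a. simpl.
      replace (e 0%nat * RtoC 1 - e 0%nat)%C with (RtoC 0) by ring.
      rewrite Cmod_0. lra.
    - rewrite sum_Sn. change (plus (sum_n a n) (a (S n))) with (sum_n a n + a (S n))%C.
      replace (sum_n a n + a (S n) - e 0%nat)%C with ((sum_n a n - e 0%nat) + a (S n))%C by ring.
      assert (Ha : Cmod (a (S n)) <= M * x ^ S n).
      { unfold a. rewrite Cmod_mult, Cmod_Cpow, Ht, Rpow_mult_distr.
        assert (h := HM (S n)). rewrite Cmod_mult, Cmod_Cpow, Ht0 in h.
        assert (0 <= x ^ S n) by (apply pow_le; lra).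
        replace (Cmod (e (S n)) * (x ^ S n * t0 ^ S n)) with ((Cmod (e (S n)) * t0 ^ S n) * x ^ S n) by ring.
        apply Rmult_le_compat_r; lra. }
      assert (Htri := Cmod_triangle (sum_n a n - e 0%nat)%C (a (S n))).
      assert (0 <= x ^ S n) by (apply pow_le; lra).
      assert (M * x ^ S n * (2 * x - 1) <= 0).
      { apply Rmult_le_0_l. apply Rmult_le_pos; lra. lra. }
      simpl pow in *. nra. }
  set (nf := @norm_factor _ C_NormedModule).
  assert (Hnf : 0 < nf) by apply norm_factor_gt_0.
  assert (Heps : 0 < E / (2 * nf)) by (apply Rdiv_lt_0_compat; lra).
  assert (Hser := H t ltac:(rewrite Ht; unfold t0 in *; split; nra)).
  destruct (proj1 (filterlim_locally _ _) Hser (mkposreal _ Heps)) as [N HN].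
  assert (Hb := HN N (Nat.le_refl _)). apply norm_compat2 in Hb. simpl in Hb.
  assert (Hb' : Cmod (sum_n a N) < E / 2).
  { replace (E/2) with (nf * (E / (2 * nf))) by (field; lra).
    replace (sum_n a N) with (minus (sum_n a N) (RtoC 0)). exact Hb.
    change (minus (sum_n a N) (RtoC 0)) with (sum_n a N - RtoC 0)%C.
    assert (Hz : forall s : C, (s - RtoC 0)%C = s) by (intros; ring). apply Hz. }
  assert (h := Hind N).
  assert (0 <= 2 * M * x ^ S N) by (assert (0 <= x ^ S N) by (apply pow_le; lra); nra).
  assert (Htri := Cmod_triangle (sum_n a N) (- (sum_n a N - e 0%nat))%C).
  rewrite Cmod_opp in Htri.
  assert (Hz2 : forall s : C, (s + - (s - e 0%nat))%C = e 0%nat) by (intros; ring). rewrite Hz2 in Htri.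
  fold E in Htri. lra.
Qed.

Lemma coef_uniq (rho : R) : 0 < rho -> forall m (e : nat -> C),
  (forall t : C, 0 < Cmod t < rho -> is_series (fun k => e k * Defs.Cpow t k)%C (RtoC 0)) ->
  e m = RtoC 0.
Proof.
  intros Hr m. induction m; intros e H.
  - exact (coef0 e rho Hr H).
  - apply (IHm (fun k => e (S k))). intros t Ht.
    assert (He0 := coef0 e rho Hr H).
    assert (Htn : t <> RtoC 0) by (apply Cmod_gt_0; lra).
    assert (H1 : is_series (fun k => (e (S k) * Defs.Cpow t (S k)))%C (RtoC 0)).
    { apply (is_series_incr_1 (fun k => (e k * Defs.Cpow t k)%C)).
      change (plus (RtoC 0) (e 0%nat * Defs.Cpow t 0))%C with (RtoC 0 + e 0%nat * Defs.Cpow t 0)%C.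
      rewrite He0. replace (RtoC 0 + RtoC 0 * Defs.Cpow t 0)%C with (RtoC 0) by ring.
      apply H; exact Ht. }
    apply (is_series_scal (/ t)%C) in H1.
    change (scal (/ t)%C (RtoC 0)) with (/ t * RtoC 0)%C in H1.
    replace (/ t * RtoC 0)%C with (RtoC 0) in H1 by ring.
    revert H1. apply is_series_ext. intros n.
    assert (Hh : forall y p : C, (/ t * (y * (t * p)))%C = (y * p)%C) by (intros; field; exact Htn).
    apply Hh.
Qed.

Definition sh (p : nat -> C) : nat -> C := fun m => match m with O => RtoC 0 | S k => p k end.
Definition dl : nat -> C := fun m => match m with O => RtoC 1 | S _ => RtoC 0 end.

Lemma hplus : forall x y : C, plus x y = Cplus x y. reflexivity. Qed.
Lemma hscal : forall x y : C, scal x y = Cmult x y. reflexivity. Qed.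
Lemma hopp : forall x : C, opp x = Copp x. reflexivity. Qed.

Lemma isC (a b : nat -> C) (l l' : C) : (forall n, a n = b n) -> l = l' -> is_series a l -> is_series b l'.
Proof. intros H1 H2 H3. subst l'. eapply is_series_ext; eauto. Qed.

Lemma series_shift p t l : is_series (fun m => p m * Defs.Cpow t m)%C l ->
  is_series (fun m => sh p m * Defs.Cpow t m)%C (t * l)%C.
Proof.
  intros H. apply is_series_decr_1.
  apply (is_series_scal t) in H.
  revert H. apply isC.
  - intros n. rewrite ?hscal; simpl; ring.
  - rewrite ?hscal, ?hplus, ?hopp; simpl; ring.
Qed.

Lemma series_delta p t l : is_series (fun m => p m * Defs.Cpow t m)%C l ->
  is_series (fun m => dl m * Defs.Cpow t m)%C (RtoC 1).
Proof.
  intros H. apply is_series_decr_1.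
  apply (is_series_scal (RtoC 0)) in H.
  revert H. apply isC.
  - intros n. rewrite ?hscal; simpl; ring.
  - rewrite ?hscal, ?hplus, ?hopp; simpl; ring.
Qed.
Lemma one_minus_ne0 (w t : C) (K : R) : Cmod w < K -> Cmod t < / K -> (RtoC 1 - w * t)%C <> RtoC 0.
Proof.
  intros Hw Ht Heq.
  assert (HK : 0 < K) by (pose proof (Cmod_ge_0 w); lra).
  assert (E : (w * t)%C = RtoC 1).
  { assert (Hh : forall x y : C, (x - y = 0)%C -> y = x) by (intros x y h; replace y with (x - (x - y))%C by ring; rewrite h; ring).
    apply Hh; exact Heq. }
  apply (f_equal Cmod) in E. rewrite Cmod_mult, Cmod_1 in E.
  assert (0 <= Cmod t) by apply Cmod_ge_0. assert (0 <= Cmod w) by apply Cmod_ge_0.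
  assert (Cmod w * Cmod t <= Cmod w * / K) by (apply Rmult_le_compat_l; lra).
  assert (Cmod w * / K < K * / K) by (apply Rmult_lt_compat_r; [apply Rinv_0_lt_compat; lra| lra]).
  rewrite Rinv_r in H2 by lra. lra.
Qed.

Lemma series_cmul (k : C) (a : nat -> C) (l : C) : is_series a l -> is_series (fun n => k * a n)%C (k * l)%C.
Proof. intros H. apply (is_series_scal k) in H. exact H. Qed.
Lemma series_cplus (a b : nat -> C) (l l' : C) : is_series a l -> is_series b l' -> is_series (fun n => a n + b n)%C (l + l')%C.
Proof. intros H H'. exact (is_series_plus _ _ _ _ H H'). Qed.
Lemma series_cminus (a b : nat -> C) (l l' : C) : is_series a l -> is_series b l' -> is_series (fun n => a n - b n)%C (l - l')%C.
Proof. intros H H'. exact (is_series_minus _ _ _ _ H H'). Qed.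

Lemma recur (a b c u v : R) (z : C) (p : nat -> C) (hc : c <> 0)
  (Ha : a = c * (u * v)) (Hb : b = - (c * (u + v)))
  (H : exists r, 0 < r /\ forall t : C, Cmod t < r ->
     is_series (fun m => Cmult (p m) (Defs.Cpow t m))
       (Cinv (Cmult (Cplus (Cplus (Cmult (RtoC a) (Cmult t t)) (Cmult (RtoC b) t)) (RtoC c))
                    (Cminus (RtoC 1) (Cmult t z))))) :
  forall m, (RtoC c * (p m - (RtoC u + RtoC v + z) * sh p m
       + (RtoC u * RtoC v + RtoC u * z + RtoC v * z) * sh (sh p) m
       - RtoC u * RtoC v * z * sh (sh (sh p)) m) - dl m)%C = RtoC 0.
Proof.
  destruct H as [r [hr H]].
  set (K := Rabs u + Rabs v + Cmod z + 1).
  assert (HK : 0 < K) by (unfold K; pose proof (Rabs_pos u); pose proof (Rabs_pos v); pose proof (Cmod_ge_0 z); lra).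
  intros m.
  assert (Hpos : 0 < Rmin r (/ K)) by (apply Rmin_pos; [lra | apply Rinv_0_lt_compat; lra]).
  apply (coef_uniq (Rmin r (/ K)) Hpos m (fun m => (RtoC c * (p m - (RtoC u + RtoC v + z) * sh p m
       + (RtoC u * RtoC v + RtoC u * z + RtoC v * z) * sh (sh p) m
       - RtoC u * RtoC v * z * sh (sh (sh p)) m) - dl m)%C)).
  clear m. intros t [Ht0 Ht].
  assert (Htr : Cmod t < r) by (eapply Rlt_le_trans; [exact Ht| apply Rmin_l]).
  assert (HtK : Cmod t < / K) by (eapply Rlt_le_trans; [exact Ht| apply Rmin_r]).
  set (D := Cmult (Cplus (Cplus (Cmult (RtoC a) (Cmult t t)) (Cmult (RtoC b) t)) (RtoC c))
                    (Cminus (RtoC 1) (Cmult t z))).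
  assert (HD : D = (RtoC c * ((RtoC 1 - RtoC u * t) * (RtoC 1 - RtoC v * t) * (RtoC 1 - z * t)))%C).
  { unfold D. rewrite Ha, Hb, !RtoC_mult, RtoC_opp, RtoC_mult, RtoC_plus. ring. }
  assert (HDne : D <> RtoC 0).
  { rewrite HD. apply Cmult_neq_0. intro h; apply hc; injection h; auto.
    apply Cmult_neq_0; [apply Cmult_neq_0|]; apply (one_minus_ne0 _ _ K); auto;
    rewrite ?Cmod_R; unfold K; pose proof (Rabs_pos u); pose proof (Rabs_pos v); pose proof (Cmod_ge_0 z); lra. }
  set (F := Cinv D).
  assert (HDF : (D * F)%C = RtoC 1) by (apply Cinv_r; exact HDne).
  assert (S0 := H t Htr). fold D F in S0.
  assert (S1 := series_shift _ _ _ S0).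
  assert (S2 := series_shift _ _ _ S1).
  assert (S3 := series_shift _ _ _ S2).
  assert (Sd := series_delta _ _ _ S0).
  assert (T := series_cminus _ _ _ _
     (series_cmul (RtoC c) _ _ (series_cplus _ _ _ _ S0
        (series_cplus _ _ _ _ (series_cmul (- (RtoC u + RtoC v + z))%C _ _ S1)
           (series_cplus _ _ _ _ (series_cmul (RtoC u * RtoC v + RtoC u * z + RtoC v * z)%C _ _ S2)
               (series_cmul (- (RtoC u * RtoC v * z))%C _ _ S3))))) Sd).
  revert T. apply isC.
  - intros n. ring.
  -     transitivity (RtoC c * ((RtoC 1 - RtoC u * t) * (RtoC 1 - RtoC v * t) * (RtoC 1 - z * t)) * F - RtoC 1)%C.
    + ring.
    + rewrite <- HD, HDF. ring.
Qed.

Lemma bern (d : R) (k : nat) : 0 <= d -> 1 + INR k * d <= (1 + d) ^ k.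
Proof.
  intros hd. induction k.
  - simpl. lra.
  - rewrite S_INR. simpl pow.
    assert (0 <= INR k) by apply pos_INR.
    assert (0 <= INR k * d * d) by (apply Rmult_le_pos; [apply Rmult_le_pos|]; lra).
    nra.
Qed.

Lemma eventually_small (q : R) : 0 <= q < 1 ->
  exists N, forall k, (N < k)%nat -> (2 * INR k + 3) * q ^ k < 1.
Proof.
  intros [hq0 hq1].
  set (s := (1 + q) / 2). set (d := (1 - q) / (1 + q)).
  assert (hs0 : 0 < s) by (unfold s; lra). assert (hs1 : s < 1) by (unfold s; lra).
  assert (hd : 0 < d) by (unfold d; apply Rdiv_lt_0_compat; lra).
  assert (hsd : s * (1 + d) = 1) by (unfold s, d; field; lra).
  assert (hqs : q <= s * s) by (unfold s; nra).
  set (C0 := 2 / d + 3).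
  assert (hC0 : 0 < C0) by (unfold C0; assert (0 < 2 / d) by (apply Rdiv_lt_0_compat; lra); lra).
  assert (hb : forall k, (2 * INR k + 3) * s ^ k <= C0).
  { intros k. assert (h1 := bern d k (Rlt_le _ _ hd)).
    assert (h2 : s ^ k * (1 + d) ^ k = 1) by (rewrite <- Rpow_mult_distr, hsd; apply pow1).
    assert (h3 : 0 < s ^ k) by (apply pow_lt; lra).
    assert (h4 : 2 * INR k + 3 <= C0 * (1 + INR k * d)).
    { unfold C0. assert (0 <= INR k) by apply pos_INR.
      replace ((2 / d + 3) * (1 + INR k * d)) with (2 / d + 3 + 2 * INR k + 3 * INR k * d) by (field; lra).
      assert (0 < 2 / d) by (apply Rdiv_lt_0_compat; lra).
      assert (0 <= 3 * INR k * d) by (apply Rmult_le_pos; [|lra]; lra). lra. }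
    apply Rle_trans with (C0 * (1 + INR k * d) * s ^ k).
    - apply Rmult_le_compat_r; lra.
    - assert (s ^ k * (1 + INR k * d) <= 1) by (rewrite <- h2; apply Rmult_le_compat_l; lra).
      nra. }
  destruct (pow_lt_1_zero s ltac:(rewrite Rabs_pos_eq; lra) (/ C0) ltac:(apply Rinv_0_lt_compat; lra)) as [N HN].
  exists N. intros k hk.
  assert (h5 := HN k ltac:(lia)). rewrite Rabs_pos_eq in h5 by (apply pow_le; lra).
  assert (hqk : q ^ k <= s ^ k * s ^ k).
  { rewrite <- Rpow_mult_distr. apply pow_incr. lra. }
  assert (h6 := hb k).
  assert (0 <= INR k) by apply pos_INR.
  assert (h7 : 0 < s ^ k) by (apply pow_lt; lra).
  apply Rle_lt_trans with ((2 * INR k + 3) * s ^ k * s ^ k).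
  - rewrite Rmult_assoc. apply Rmult_le_compat_l; lra.
  - apply Rle_lt_trans with (C0 * s ^ k). apply Rmult_le_compat_r; lra.
    apply (Rmult_lt_compat_l C0) in h5; [|lra]. rewrite Rinv_r in h5; lra.
Qed.

Lemma RtoC_Cpow (x : R) n : RtoC (x ^ n) = Defs.Cpow (RtoC x) n.
Proof. induction n; simpl. reflexivity. rewrite <- IHn. apply RtoC_mult. Qed.

Fixpoint Bs (u v : R) (z : C) (n : nat) : C :=
  match n with O => RtoC 1 | S k => (z * Bs u v z k + RtoC (v ^ S k))%C end.
Fixpoint Xs (u v : R) (z : C) (n : nat) : C :=
  match n with O => RtoC 1 | S k => (RtoC u * Xs u v z k + Bs u v z (S k))%C end.
Fixpoint As (u v : R) (n : nat) : R :=
  match n with O => 1 | S k => u * As u v k + v ^ S k end.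

Lemma Xs_rec u v z n :
  Xs u v z (S (S (S n))) = ((RtoC u + RtoC v + z) * Xs u v z (S (S n))
     - (RtoC u * RtoC v + RtoC u * z + RtoC v * z) * Xs u v z (S n)
     + RtoC u * RtoC v * z * Xs u v z n)%C.
Proof.
  set (X := Xs u v z). set (B := Bs u v z).
  assert (hX : forall k, X (S k) = (RtoC u * X k + B (S k))%C) by reflexivity.
  assert (hB : forall k, B (S k) = (z * B k + RtoC (v ^ S k))%C) by reflexivity.
  assert (hV : forall k, RtoC (v ^ S k) = (RtoC v * RtoC (v ^ k))%C) by (intros; simpl; apply RtoC_mult).
  assert (e1 : B (S n) = (X (S n) - RtoC u * X n)%C) by (rewrite hX; ring).
  assert (e2 : B (S (S n)) = (X (S (S n)) - RtoC u * X (S n))%C) by (rewrite (hX (S n)); ring).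
  assert (e3 : RtoC (v ^ S (S n)) = (B (S (S n)) - z * B (S n))%C) by (rewrite (hB (S n)); ring).
  rewrite hX, hB, hV, e3, e2, e1. ring.
Qed.

Lemma cP_eq_X (c u v : R) (z : C) (p : nat -> C)
  (hr : forall m, (RtoC c * (p m - (RtoC u + RtoC v + z) * sh p m
       + (RtoC u * RtoC v + RtoC u * z + RtoC v * z) * sh (sh p) m
       - RtoC u * RtoC v * z * sh (sh (sh p)) m) - dl m)%C = RtoC 0) :
  forall m, (RtoC c * p m)%C = Xs u v z m.
Proof.
  assert (H : forall n, (RtoC c * p n)%C = Xs u v z n /\ (RtoC c * p (S n))%C = Xs u v z (S n)
                 /\ (RtoC c * p (S (S n)))%C = Xs u v z (S (S n))).
  { induction n.
    - assert (h0 := hr 0%nat). assert (h1 := hr 1%nat). assert (h2 := hr 2%nat).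
      simpl in h0, h1, h2. simpl.
      assert (k0 : (RtoC c * p 0%nat)%C = RtoC 1).
      { assert (Hh : forall x : C, (RtoC c * (x - (RtoC u + RtoC v + z) * RtoC 0 + (RtoC u * RtoC v + RtoC u * z + RtoC v * z) * RtoC 0
             - RtoC u * RtoC v * z * RtoC 0) - RtoC 1)%C = (RtoC c * x - RtoC 1)%C) by (intros; ring).
        rewrite Hh in h0. replace (RtoC c * p 0%nat)%C with ((RtoC c * p 0%nat - RtoC 1) + RtoC 1)%C by ring.
        rewrite h0. ring. }
      assert (k1 : (RtoC c * p 1%nat)%C = ((RtoC u + RtoC v + z) * (RtoC c * p 0%nat))%C).
      { replace (RtoC c * p 1%nat)%C with ((RtoC c * (p 1%nat - (RtoC u + RtoC v + z) * p 0%nat + (RtoC u * RtoC v + RtoC u * z + RtoC v * z) * RtoC 0 -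
         RtoC u * RtoC v * z * RtoC 0) - RtoC 0) + (RtoC u + RtoC v + z) * (RtoC c * p 0%nat))%C by ring.
        rewrite h1. ring. }
      assert (k2 : (RtoC c * p 2%nat)%C = ((RtoC u + RtoC v + z) * (RtoC c * p 1%nat)
          - (RtoC u * RtoC v + RtoC u * z + RtoC v * z) * (RtoC c * p 0%nat))%C).
      { replace (RtoC c * p 2%nat)%C with ((RtoC c * (p 2%nat - (RtoC u + RtoC v + z) * p 1%nat + (RtoC u * RtoC v + RtoC u * z + RtoC v * z) * p 0%nat -
         RtoC u * RtoC v * z * RtoC 0) - RtoC 0) + ((RtoC u + RtoC v + z) * (RtoC c * p 1%nat)
          - (RtoC u * RtoC v + RtoC u * z + RtoC v * z) * (RtoC c * p 0%nat)))%C by ring.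
        rewrite h2. ring. }
      rewrite k2, k1, k0. rewrite !RtoC_mult. split; [|split]; ring.
    - destruct IHn as [i0 [i1 i2]]. split; [exact i1|split; [exact i2|]].
      rewrite Xs_rec. rewrite <- i0, <- i1, <- i2.
      assert (h := hr (S (S (S n)))). simpl in h.
      replace (RtoC c * p (S (S (S n))))%C with ((RtoC c * (p (S (S (S n))) - (RtoC u + RtoC v + z) * p (S (S n)) +
          (RtoC u * RtoC v + RtoC u * z + RtoC v * z) * p (S n) - RtoC u * RtoC v * z * p n) - RtoC 0)
          + ((RtoC u + RtoC v + z) * (RtoC c * p (S (S n)))
     - (RtoC u * RtoC v + RtoC u * z + RtoC v * z) * (RtoC c * p (S n))
     + RtoC u * RtoC v * z * (RtoC c * p n)))%C by ring.
      rewrite h. ring. }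
  intros m. apply H.
Qed.

Lemma X_id u v z m : ((RtoC u - z) * Xs u v z m)%C = (RtoC (As u v (S m)) - Bs u v z (S m))%C.
Proof.
  induction m.
  - simpl. rewrite !RtoC_plus, !RtoC_mult. ring.
  - change (Xs u v z (S m)) with (RtoC u * Xs u v z m + Bs u v z (S m))%C.
    change (As u v (S (S m))) with (u * As u v (S m) + v ^ S (S m)).
    change (Bs u v z (S (S m))) with (z * Bs u v z (S m) + RtoC (v ^ S (S m)))%C.
    rewrite RtoC_plus, RtoC_mult.
    replace ((RtoC u - z) * (RtoC u * Xs u v z m + Bs u v z (S m)))%C
      with (RtoC u * ((RtoC u - z) * Xs u v z m) + (RtoC u - z) * Bs u v z (S m))%C by ring.
    rewrite IHm. ring.
Qed.

Lemma A_id u v n : (u - v) * As u v n = u ^ S n - v ^ S n.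
Proof.
  induction n.
  - simpl. ring.
  - change (As u v (S n)) with (u * As u v n + v ^ S n).
    replace ((u - v) * (u * As u v n + v ^ S n)) with (u * ((u - v) * As u v n) + (u - v) * v ^ S n) by ring.
    rewrite IHn. simpl. ring.
Qed.

Lemma B_bound u v z r n : Cmod z <= r -> Rabs v <= r ->
  Cmod (Bs u v z n) <= (INR n + 1) * r ^ n.
Proof.
  intros hz hv. assert (hr : 0 <= r) by (pose proof (Rabs_pos v); lra).
  induction n.
  - simpl. rewrite Cmod_1. lra.
  - change (Bs u v z (S n)) with (z * Bs u v z n + RtoC (v ^ S n))%C.
    eapply Rle_trans. apply Cmod_triangle.
    rewrite Cmod_mult, Cmod_R, <- RPow_abs.
    assert (h1 : Rabs v ^ S n <= r ^ S n) by (apply pow_incr; split; [apply Rabs_pos|lra]).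
    assert (h2 : Cmod z * Cmod (Bs u v z n) <= r * ((INR n + 1) * r ^ n)).
    { apply Rmult_le_compat; auto using Cmod_ge_0. }
    rewrite S_INR. simpl pow in *. nra.
Qed.

Theorem mainTheorem11 (a b c : R) (ha : a <> 0) (hb : b <> 0) (hc : c <> 0)
  (hdisc : b ^ 2 - 4 * a * c > 0)
  (P : nat -> C -> C)
  (hP : generated_by P
          (fun t z => Cinv (Cmult (Cplus (Cplus (Cmult (RtoC a) (Cmult t t))
                                                (Cmult (RtoC b) t)) (RtoC c))
                                  (Cminus (RtoC 1) (Cmult t z)))))
  (alpha beta : R)
  (halpha : a * alpha ^ 2 + b * alpha + c = 0)
  (hbeta : a * beta ^ 2 + b * beta + c = 0)
  (hab : alpha <> beta)
  (hle : Rabs alpha <= Rabs beta) :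
  exists N : nat, forall m : nat, (N < m)%nat ->
    forall z : C, ball0 ((/ Rabs alpha + / Rabs beta) / 2) z -> P m z <> RtoC 0.
Proof.
  assert (ha0 : alpha <> 0) by (intro h; subst; apply hc; simpl in halpha; lra).
  assert (hb0 : beta <> 0) by (intro h; subst; apply hc; simpl in hbeta; lra).
  assert (hsum : a * (alpha + beta) = - b).
  { assert (h : (alpha - beta) * (a * (alpha + beta) + b) = 0) by (simpl in *; nra).
    apply Rmult_integral in h. destruct h as [h|h]; [exfalso; apply hab; lra| lra]. }
  assert (hprod : a * alpha * beta = c) by (simpl in halpha; nra).
  assert (hlt : Rabs alpha < Rabs beta).
  { destruct (Req_dec (Rabs alpha) (Rabs beta)) as [h|h]; [|lra].
    exfalso. assert (h2 : alpha ^ 2 = beta ^ 2) by (rewrite <- (pow2_abs alpha), <- (pow2_abs beta), h; reflexivity).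
    assert (h3 : (alpha - beta) * (alpha + beta) = 0) by nra.
    apply Rmult_integral in h3. destruct h3 as [h3|h3]. apply hab; lra.
    apply hb. rewrite h3 in hsum. lra. }
  set (u := / alpha). set (v := / beta).
  assert (Ha : a = c * (u * v)) by (unfold u, v; rewrite <- hprod; field; auto).
  assert (Hb : b = - (c * (u + v))) by (unfold u, v; rewrite <- hprod; replace b with (- (a * (alpha + beta))) by lra; field; auto).
  assert (hU : Rabs u = / Rabs alpha) by (unfold u; apply Rabs_inv).
  assert (hV : Rabs v = / Rabs beta) by (unfold v; apply Rabs_inv).
  assert (hA0 : 0 < Rabs alpha) by (apply Rabs_pos_lt; auto).
  assert (hVU : Rabs v < Rabs u) by (rewrite hU, hV; apply Rinv_lt_contravar; nra).
  assert (hV0 : 0 < Rabs v) by (rewrite hV; apply Rinv_0_lt_compat; apply Rabs_pos_lt; auto).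
  set (U := Rabs u) in *. set (V := Rabs v) in *.
  set (r := (U + V) / 2).
  assert (hr : (/ Rabs alpha + / Rabs beta) / 2 = r) by (unfold r; rewrite hU, hV; reflexivity).
  rewrite hr.
  set (q := r / U).
  assert (hq : 0 <= q < 1).
  { unfold q, r. split. apply Rmult_le_pos; [lra | left; apply Rinv_0_lt_compat; lra].
    apply (Rmult_lt_reg_r U); [lra|]. unfold Rdiv. rewrite Rmult_assoc, Rinv_l by lra. lra. }
  destruct (eventually_small q hq) as [N HN].
  exists N. intros m hm z hz H0. unfold ball0 in hz.
  assert (hrec := recur a b c u v z (fun m => P m z) hc Ha Hb (hP z)).
  assert (hX := cP_eq_X c u v z (fun m => P m z) hrec m). simpl in hX.
  rewrite H0 in hX.
  assert (hid := X_id u v z m). rewrite <- hX in hid.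
  assert (hAB : RtoC (As u v (S m)) = Bs u v z (S m)).
  { assert (Hh : forall x y w : C, (w * (RtoC c * RtoC 0))%C = (x - y)%C -> x = y).
    { intros x y w h. replace x with ((x - y) + y)%C by ring. rewrite <- h. ring. }
    exact (Hh _ _ _ hid). }
  set (k := S m) in *.
  assert (hBb := B_bound u v z r k ltac:(lra) ltac:(fold V; unfold r; lra)).
  rewrite <- hAB, Cmod_R in hBb.
  assert (hAid := A_id u v k).
  assert (h1 : U ^ S k - V ^ S k <= Rabs (u ^ S k - v ^ S k)).
  { unfold U, V. rewrite !RPow_abs. apply Rabs_triang_inv. }
  assert (h2 : Rabs (u - v) <= U + V).
  { unfold Rminus. eapply Rle_trans. apply Rabs_triang. rewrite Rabs_Ropp. unfold U, V. lra. }
  rewrite <- hAid, Rabs_mult in h1.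
  set (Ak := Rabs (As u v k)) in *.
  assert (hAk0 : 0 <= Ak) by apply Rabs_pos.
  assert (hk0 : 0 <= INR k) by apply pos_INR.
  assert (hr0 : 0 < r) by (unfold r; lra).
  assert (hrk : 0 < r ^ k) by (apply pow_lt; lra).
  assert (h3 : Rabs (u - v) * Ak <= 2 * U * ((INR k + 1) * r ^ k)).
  { apply Rle_trans with ((U + V) * ((INR k + 1) * r ^ k)).
    apply Rmult_le_compat; auto using Rabs_pos. apply Rmult_le_compat_r; [|lra].
    apply Rmult_le_pos; lra. }
  assert (h4 : V ^ S k <= U * r ^ k).
  { change (V ^ S k) with (V * V ^ k). apply Rmult_le_compat; try lra. apply pow_le; lra. apply pow_incr; unfold r; lra. }
  assert (h5 : (2 * INR k + 3) * r ^ k < U ^ k).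
  { assert (h := HN k ltac:(unfold k; lia)).
    unfold q in h. unfold Rdiv in h. rewrite Rpow_mult_distr, pow_inv in h.
    assert (0 < U ^ k) by (apply pow_lt; lra).
    apply (Rmult_lt_compat_r (U ^ k)) in h; [|lra].
    rewrite Rmult_1_l in h. replace ((2 * INR k + 3) * (r ^ k * / U ^ k) * U ^ k) with ((2 * INR k + 3) * r ^ k) in h by (field; lra).
    exact h. }
  assert (h6 : U * U ^ k <= U * ((2 * INR k + 3) * r ^ k)).
  { change (U ^ S k) with (U * U ^ k) in h1. nra. }
  assert (h7 : U ^ k <= (2 * INR k + 3) * r ^ k).
  { apply (Rmult_le_reg_l U); lra. }
  lra.
Qed.
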